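(* Let $((G_n)_{n\in\mathbb{N}},(\rho_n)_{n\in\mathbb{N}},(\kappa_k^n)_{k\le n})$ be a diverse $d$-ary cloning system, and let $n_0\in\mathbb{N}$ be such that $\bigcap_{k=1}^n\mathrm{Im}\,\kappa_k^n=\{1\}$ for all $n\ge n_0$. Let $x\in\mathscr{T}_d(G_* )$. If $x^{-1}[T,U]x\in F_d$ for all $d$-ary trees $T,U$ having the same number of leaves, that number being at least $n_0$, then $x\in F_d$.
   Context: Fix an integer $d\ge 2$. A $d$-ary tree is a finite rooted tree in which each non-leaf vertex has exactly $d$ ordered children; its leaves are numbered $1,\dots,n$ from left to right, and $n(T)$ is the number of leaves. For $1\le k\le n(T)$, $T_k$ denotes the tree obtained from $T$ by attaching a $d$-ary caret to the $k$-th leaf. Standard cloning maps: for $\sigma\in S_n$, $1\le k\le n$, partition $\{1,\dots,n+d-1\}$ into consecutive blocks $B^{(k)}_j=\{j\}$ ($j<k$), $B^{(k)}_k=\{k,\dots,k+d-1\}$, $B^{(k)}_j=\{j+d-1\}$ ($j>k$); $(\sigma)\varsigma_k^n\in S_{n+d-1}$ maps $B^{(k)}_j$ onto $B^{(\sigma(k))}_{\sigma(j)}$ preserving order. A $d$-ary cloning system consists of groups $(G_n)$, homomorphisms $\rho_n:G_n\to S_n$ and injective functions $\kappa_k^n:G_n\to G_{n+d-1}$ ($1\le k\le n$), written on the right with $(g)(\kappa\circ\kappa'):=((g)\kappa)\kappa'$, such that for $1\le k<\ell\le n$, $g,h\in G_n$: (C1) $(gh)\kappa_k^n=(g)\kappa^n_{\rho_n(h)k}(h)\kappa_k^n$;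 (C2) $\kappa_\ell^n\circ\kappa_k^{n+d-1}=\kappa_k^n\circ\kappa_{\ell+d-1}^{n+d-1}$; (C3) $\rho_{n+d-1}((g)\kappa_k^n)(i)=((\rho_n(g))\varsigma_k^n)(i)$ for $i\notin\{k,\dots,k+d-1\}$. $\mathscr{T}_d(G_* )$ is the group of classes $[T,g,U]$ ($T,U$ $d$-ary trees with $n$ leaves, $g\in G_n$) under the equivalence generated by $(T,g,U)\sim(T_{\rho_n(g)(k)},(g)\kappa_k^n,U_k)$, with product $[T,g,U][U,h,W]=[T,gh,W]$. We write $[T,U]=[T,1,U]$; these elements form the subgroup $F_d$ (the Higman–Thompson group). The system is diverse if some $n_0$ satisfies $\bigcap_{k=1}^n\mathrm{Im}\,\kappa_k^n=\{1\}$ for all $n\ge n_0$. *)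

(* Defs.v *)
From Stdlib Require Import Relations.Relation_Operators.
From HB Require Import structures.
From mathcomp Require Import all_boot all_order all_fingroup.
Set Implicit Arguments. Unset Strict Implicit. Unset Printing Implicit Defensive.

(* Conventions: leaves, carets positions, and the set {1,...,n} on which S_n
   acts are all 0-based: 'I_n = {0,...,n-1} (leaf k+1 of the paper = k). *)

Inductive dtree (d : nat) : Type :=
  | Leaf : dtree d
  | Node : {ffun 'I_d -> dtree d} -> dtree d.
Arguments Leaf {d}.

Fixpoint nleaves d (T : dtree d) : nat :=
  match T with
  | Leaf => 1
  | Node f => \sum_(i < d) nleaves (f i)
  end.

Fixpoint expand d (T : dtree d) (k : nat) : dtree d :=
  match T with
  | Leaf => Node [ffun _ : 'I_d => @Leaf d]
  | Node f =>
      Node [ffun i : 'I_d =>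
              let off := \sum_(j < d | j < i) nleaves (f j) in
              if (off <= k < off + nleaves (f i)) then expand (f i) (k - off)
              else f i]
  end.

Definition widen_by n m (k : 'I_n) : 'I_(n + m) := widen_ord (leq_addr m n) k.
Definition shift_by n m (l : 'I_n) : 'I_(n + m) :=
  @Ordinal (n + m) (l + m) (etrans (ltn_add2r m l n) (ltn_ord l)).

(** The standard cloning map (sigma) varsigma_k^n, as a function on 0-based
    positions of {0,...,n+d-2}: position i lies in block blk i (blocks
    B_j = {j} for j<k, B_k = {k,...,k+d-1}, B_j = {j+d-1} for j>k), and is
    sent order-preservingly onto block B^{(sigma k)}_{sigma j}. *)
Definition clone_blk d n (k : 'I_n) (i : nat) : nat :=
  if i < k then i else if i < k + d then nat_of_ord k else i - d.-1.

Definition clone_perm d n (sigma : 'I_n -> 'I_n) (k : 'I_n) (i : nat) : nat :=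
  let j : 'I_n := insubd k (clone_blk d k i) in
  if j == k then sigma k + (i - k)
  else if sigma j < sigma k then nat_of_ord (sigma j) else sigma j + d.-1.

(** S_n is {perm 'I_n}; rho_n is a homomorphism for
    the usual composition of maps (rho(gh) = rho(g) o rho(h)). *)
Record CloningSystem (d : nat) := {
  G : nat -> Type;
  gmul : forall n, G n -> G n -> G n;
  gone : forall n, G n;
  ginv : forall n, G n -> G n;
  gmulA : forall n (x y z : G n), gmul x (gmul y z) = gmul (gmul x y) z;
  gmul1g : forall n (x : G n), gmul (gone n) x = x;
  gmulg1 : forall n (x : G n), gmul x (gone n) = x;
  gmulVg : forall n (x : G n), gmul (ginv x) x = gone n;
  gmulgV : forall n (x : G n), gmul x (ginv x) = gone n;
  rho : forall n, G n -> {perm 'I_n};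
  rho_hom : forall n (g h : G n) (i : 'I_n), rho (gmul g h) i = rho g (rho h i);
  kappa : forall n, 'I_n -> G n -> G (n + d.-1);
  kappa_inj : forall n (k : 'I_n), injective (kappa k);
  clone_C1 : forall n (k : 'I_n) (g h : G n),
      kappa k (gmul g h) = gmul (kappa (rho h k) g) (kappa k h);
  clone_C2 : forall n (k l : 'I_n) (g : G n), k < l ->
      kappa (widen_by d.-1 k) (kappa l g) = kappa (shift_by d.-1 l) (kappa k g);
  clone_C3 : forall n (k : 'I_n) (g : G n) (i : 'I_(n + d.-1)),
      ~~ (k <= i < k + d) ->
      nat_of_ord (rho (kappa k g) i) = clone_perm d (rho g) k i
}.

Section Thompson.
Variables (d : nat) (C : CloningSystem d).

(** representatives (T, g, U) of elements of T_d(G_* ) *)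
Record trip := Trip { tn : nat; tT : dtree d; tg : G C tn; tU : dtree d }.

Definition valid (t : trip) : Prop := nleaves (tT t) = tn t /\ nleaves (tU t) = tn t.

Definition expand_step (t t' : trip) : Prop :=
  valid t /\
  exists k : 'I_(tn t),
    t' = @Trip (tn t + d.-1) (expand (tT t) (rho (tg t) k)) (kappa k (tg t))
               (expand (tU t) k).

Definition trip_equiv : trip -> trip -> Prop := clos_refl_sym_trans trip expand_step.

Definition TU (T U : dtree d) : trip := @Trip (nleaves T) T (gone C _) U.

Definition inF (x : trip) : Prop :=
  exists T U, nleaves T = nleaves U /\ trip_equiv x (TU T U).

Definition mulR (x y z : trip) : Prop :=
  exists n (T U W : dtree d) (g h : G C n),
    valid (Trip T g U) /\ valid (Trip U h W) /\
    trip_equiv x (Trip T g U) /\ trip_equiv y (Trip U h W) /\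
    trip_equiv z (Trip T (gmul g h) W).

Definition invR (x y : trip) : Prop :=
  exists n (T U : dtree d) (g : G C n),
    valid (Trip T g U) /\ trip_equiv x (Trip T g U) /\ trip_equiv y (Trip U (ginv g) T).

Definition conj_in_F (x : trip) (T U : dtree d) : Prop :=
  exists a b c, invR x a /\ mulR a (TU T U) b /\ mulR b x c /\ inF c.

End Thompson.

(* Main.v *)
Require Import Defs.
From HB Require Import structures.
From mathcomp Require Import all_boot all_order all_fingroup.
From mathcomp Require Import zify.
From Stdlib Require Import Relations.Relation_Operators.
Set Implicit Arguments. Unset Strict Implicit. Unset Printing Implicit Defensive.

Section Trees.
Variable d : nat.
Hypothesis d_gt0 : 0 < d.
Implicit Types f : {ffun 'I_d -> dtree d}.

Definition dtree_ind' (P : dtree d -> Prop) (hL : P Leaf)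
  (hN : forall f : {ffun 'I_d -> dtree d}, (forall i, P (f i)) -> P (Node f)) : forall t, P t :=
  fix IH t := match t with Leaf => hL | Node f => hN f (fun i => IH (f i)) end.

Fixpoint ld (T : dtree d) : seq nat :=
  match T with
  | Leaf => [:: 0]
  | Node f => flatten [seq map S (ld (f i)) | i <- enum 'I_d]
  end.

Definition ch (f : {ffun 'I_d -> dtree d}) := [seq f i | i <- enum 'I_d].

Lemma size_ch f : size (ch f) = d.
Proof. by rewrite size_map size_enum_ord. Qed.

Lemma nth_ch f (i : 'I_d) : nth Leaf (ch f) i = f i.
Proof. by rewrite (nth_map i) ?nth_ord_enum // size_enum_ord. Qed.

Lemma sum_ord_take (s : seq nat) i : i <= size s ->
  \sum_(j < i) nth 0 s j = sumn (take i s).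
Proof.
elim: s i => [|a s IH] [|i] //= hi; try by rewrite big_ord0.
by rewrite big_ord_recl /= IH.
Qed.

Lemma sum_ord_all (s : seq nat) : \sum_(j < size s) nth 0 s j = sumn s.
Proof. by rewrite sum_ord_take // take_size. Qed.

Lemma nleaves_Node f : nleaves (Node f) = sumn (map (@nleaves d) (ch f)).
Proof.
rewrite /= -sum_ord_all.
rewrite size_map size_ch; apply: eq_bigr => i _.
by rewrite (nth_map Leaf) ?size_ch // nth_ch.
Qed.

Lemma off_take (f : {ffun 'I_d -> dtree d}) (i : 'I_d) :
  \sum_(j < d | j < i) nleaves (f j) = sumn (take i (map (@nleaves d) (ch f))).
Proof.
rewrite -sum_ord_take; last by rewrite size_map size_ch ltnW.
rewrite (big_ord_widen d (fun j => nth 0 (map (@nleaves d) (ch f)) j)) ?(ltnW (ltn_ord i)) //.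
apply: eq_bigr => j _.
by rewrite (nth_map Leaf) ?size_ch // nth_ch.
Qed.

Lemma ld_Node f : ld (Node f) = flatten [seq map S (ld c) | c <- ch f].
Proof. by rewrite /= /ch; elim: (enum 'I_d) => //= i s ->. Qed.

Lemma size_ld T : size (ld T) = nleaves T.
Proof.
elim/dtree_ind': T => [|f IH] //.
rewrite ld_Node nleaves_Node size_flatten /shape /ch.
by elim: (enum 'I_d) => //= i s ->; rewrite size_map IH.
Qed.

Lemma nleaves_gt0 (T : dtree d) : 0 < nleaves T.
Proof.
elim/dtree_ind': T => [|f IH] //=.
by rewrite (bigD1 (Ordinal d_gt0)) //=; apply: leq_trans (IH _) (leq_addr _ _).
Qed.

Fixpoint expl (cs : seq (dtree d)) (k : nat) : seq (dtree d) :=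
  match cs with
  | [::] => [::]
  | c :: cs' => if k < nleaves c then expand c k :: cs'
                else c :: expl cs' (k - nleaves c)
  end.

Definition mkN (cs : seq (dtree d)) : {ffun 'I_d -> dtree d} :=
  [ffun i : 'I_d => nth Leaf cs i].

Lemma size_expl cs k : size (expl cs k) = size cs.
Proof. by elim: cs k => [|c cs IH] k //=; case: ifP => //= _; rewrite IH. Qed.

Lemma nth_expl cs k i : i < size cs ->
  nth Leaf (expl cs k) i =
  (let o := sumn (take i (map (@nleaves d) cs)) in
   if (o <= k < o + nleaves (nth Leaf cs i)) then expand (nth Leaf cs i) (k - o)
   else nth Leaf cs i).
Proof.
elim: cs k i => [|c cs IH] k [|i] //= hi.
- by rewrite /= add0n subn0; case: ifP.
- case: ifP => hk /=.
    by rewrite ifF //; apply/negbTE; rewrite negb_and -ltnNge ltn_addr.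
  rewrite IH //=.
  have hk' : nleaves c <= k by rewrite leqNgt hk.
  have -> : (sumn (take i [seq nleaves i | i <- cs]) <= k - nleaves c) =
            (nleaves c + sumn (take i [seq nleaves i | i <- cs]) <= k).
    by rewrite leq_subRL.
  have -> : (k - nleaves c < sumn (take i [seq nleaves i | i <- cs]) + nleaves (nth Leaf cs i)) =
            (k < nleaves c + sumn (take i [seq nleaves i | i <- cs]) + nleaves (nth Leaf cs i)).
    by rewrite ltn_subLR // addnA.
  by rewrite subnDA.
Qed.

Lemma expand_Node f k : expand (Node f) k = Node (mkN (expl (ch f) k)).
Proof.
congr Node; apply/ffunP => i; rewrite !ffunE nth_expl ?size_ch //.
by rewrite off_take nth_ch.
Qed.

Lemma ch_mkN cs : size cs = d -> ch (mkN cs) = cs.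
Proof.
move=> hs; apply: (@eq_from_nth _ Leaf); first by rewrite size_ch.
move=> i; rewrite size_ch => hi.
by rewrite (nth_ch _ (Ordinal hi)) ffunE.
Qed.

Lemma Forall_ch (P : dtree d -> Prop) f : (forall i, P (f i)) -> List.Forall P (ch f).
Proof. by move=> h; rewrite /ch; elim: (enum 'I_d) => //= i s IH; constructor. Qed.

Definition lds (cs : seq (dtree d)) := flatten [seq map S (ld c) | c <- cs].

Lemma ld_Node' f : ld (Node f) = lds (ch f).
Proof. exact: ld_Node. Qed.

Lemma size_lds cs : size (lds cs) = sumn (map (@nleaves d) cs).
Proof. by elim: cs => //= c cs IH; rewrite size_cat size_map size_ld IH. Qed.

Definition LDP (T : dtree d) := forall k, k < nleaves T ->
  ld (expand T k) = take k (ld T) ++ nseq d (nth 0 (ld T) k).+1 ++ drop k.+1 (ld T).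

Lemma drop_catl T (n : nat) (s1 s2 : seq T) : n <= size s1 -> drop n (s1 ++ s2) = drop n s1 ++ s2.
Proof.
elim: s1 n => [|a s1 IH] n h /=; first by move: h; rewrite leqn0 => /eqP ->; rewrite ?drop0 ?take0.
by case: n h => [|n] h //=; rewrite IH.
Qed.
Lemma take_catl T (n : nat) (s1 s2 : seq T) : n <= size s1 -> take n (s1 ++ s2) = take n s1.
Proof.
elim: s1 n => [|a s1 IH] n h /=; first by move: h; rewrite leqn0 => /eqP ->; rewrite ?drop0 ?take0.
by case: n h => [|n] h //=; rewrite IH.
Qed.
Lemma drop_catr T (n : nat) (s1 s2 : seq T) : size s1 <= n -> drop n (s1 ++ s2) = drop (n - size s1) s2.
Proof.
elim: s1 n => [|a s1 IH] n h /=; first by rewrite subn0.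
by case: n h => [|n] h //=; rewrite IH.
Qed.
Lemma take_catr T (n : nat) (s1 s2 : seq T) : size s1 <= n -> take n (s1 ++ s2) = s1 ++ take (n - size s1) s2.
Proof.
elim: s1 n => [|a s1 IH] n h /=; first by rewrite subn0.
by case: n h => [|n] h //=; rewrite IH.
Qed.

Lemma lds_expl cs k : List.Forall LDP cs -> k < sumn (map (@nleaves d) cs) ->
  lds (expl cs k) = take k (lds cs) ++ nseq d (nth 0 (lds cs) k).+1 ++ drop k.+1 (lds cs).
Proof.
elim: cs k => [|c cs IH] k //= hF; inversion hF as [|? ? hc hcs]; subst.
have lds_cons c' cs' : lds (c' :: cs') = map S (ld c') ++ lds cs' by [].
case: ifP => hk hlt.
- rewrite !lds_cons hc // take_catl ?drop_catl ?nth_cat ?size_map ?size_ld ?hk ?(ltnW hk) //.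
  by rewrite !map_cat map_nseq -!catA map_take map_drop (nth_map 0) ?size_ld.
- have hk' : nleaves c <= k by rewrite leqNgt hk.
  have h2 : k - nleaves c < sumn [seq nleaves i | i <- cs] by rewrite ltn_subLR.
  rewrite !lds_cons (IH _ hcs h2).
  rewrite take_catr ?size_map ?size_ld //.
  rewrite drop_catr ?size_map ?size_ld; last by lia.
  rewrite nth_cat size_map size_ld ltnNge hk' /=.
  by rewrite subSn // -catA.
Qed.

Lemma LD (T : dtree d) : LDP T.
Proof.
elim/dtree_ind': T => [|f IH] k.
- case: k => //= _; rewrite cats0.
  transitivity (nseq (size (enum 'I_d)) 1); last by rewrite size_enum_ord.
  by elim: (enum 'I_d) => //= i s ->; rewrite ffunE.
- move=> hk; rewrite expand_Node ld_Node' ch_mkN ?size_expl ?size_ch //.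
  rewrite ld_Node' lds_expl //; first exact: Forall_ch.
  by rewrite -nleaves_Node.
Qed.

Lemma nleaves_expand (T : dtree d) k : k < nleaves T ->
  nleaves (expand T k) = nleaves T + d.-1.
Proof.
move=> hk; rewrite -!size_ld LD // !size_cat size_take size_drop size_nseq size_ld hk.
lia.
Qed.

Definition P2 (T : dtree d) := forall a b, a < b -> b < nleaves T ->
  expand (expand T a) (b + d.-1) = expand (expand T b) a.

Lemma expl_comm cs a b : List.Forall P2 cs -> a < b -> b < sumn (map (@nleaves d) cs) ->
  expl (expl cs a) (b + d.-1) = expl (expl cs b) a.
Proof.
elim: cs a b => [|c cs IH] a b //= hF; inversion hF as [|? ? hc hcs]; subst => hab hb.
case: (ltnP b (nleaves c)) => hbc.
- have hac : a < nleaves c by apply: ltn_trans hbc.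
  rewrite ?hac /= !nleaves_expand //.
  have -> : b + d.-1 < nleaves c + d.-1 by lia.
  have -> : a < nleaves c + d.-1 by lia.
  by rewrite hc.
- case: (ltnP a (nleaves c)) => hac.
  + rewrite ?hac /= nleaves_expand //.
    have -> : (b + d.-1 < nleaves c + d.-1) = false by lia.
    rewrite ?hac.
    by congr (_ :: expl _ _); lia.
  + rewrite /=.
    have -> : (b + d.-1 < nleaves c) = false by lia.
    have -> : (a < nleaves c) = false by lia.
    have -> : b + d.-1 - nleaves c = (b - nleaves c) + d.-1 by lia.
    by rewrite IH //; lia.
Qed.

Lemma expand_comm (T : dtree d) : P2 T.
Proof.
elim/dtree_ind': T => [|f IH] a b hab hb.
- by case: b hab hb => [|[]].
- rewrite !expand_Node !ch_mkN ?size_expl ?size_ch //.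
  rewrite expl_comm //; first exact: Forall_ch.
  by rewrite -nleaves_Node.
Qed.

End Trees.

Section Lists.
Variable d : nat.
Hypothesis d_gt1 : 1 < d.
Variable m : nat.

Definition expL (L : seq nat) k := take k L ++ nseq d (nth 0 L k).+1 ++ drop k.+1 L.
Definition shal := fun e : nat => e < m.
Definition mu (L : seq nat) := sumn [seq (d ^ (m - e)).-1 | e <- L].

Lemma size_expL L k : k < size L -> size (expL L k) = size L + d.-1.
Proof. move=> hk; rewrite /expL !size_cat size_take size_drop size_nseq hk; lia. Qed.

Lemma expL_split L k : k < size L -> L = take k L ++ nth 0 L k :: drop k.+1 L.
Proof. by move=> hk; rewrite -(drop_nth 0 hk) cat_take_drop. Qed.

Lemma all_expL L k : k < size L ->
  all (fun e => e <= m) (expL L k) = all (fun e => e <= m) L && (nth 0 L k < m).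
Proof.
move=> hk; rewrite {2}(expL_split hk) /expL !all_cat all_nseq /=.
have -> : (d == 0) = false by lia.
case: (all _ (take k L)); case: (all _ (drop k.+1 L)); rewrite /= ?andbT ?andbF //.
by apply/idP/idP => [h|/andP[]//]; rewrite h ltnW.
Qed.

Lemma find_le L k : k < size L -> nth 0 L k < m -> find shal L <= k.
Proof.
move=> hk hm; rewrite leqNgt; apply/negP => /(before_find 0).
by rewrite /shal hm.
Qed.

Lemma find_take_lt (p : pred nat) L k : find p L < k -> find p (take k L) = find p L.
Proof.
move=> h.
case: (leqP k (size L)) => hs; last by rewrite take_oversize // ltnW.
have := congr1 (find p) (cat_take_drop k L).
rewrite find_cat has_take_leq // h.
by move=> ->.
Qed.

Lemma find_expL L k : find shal L < k -> k < size L -> find shal (expL L k) = find shal L.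
Proof.
move=> hj hk; rewrite /expL find_cat has_take_leq ?size_take ?hk ?(ltnW hk) //.
by rewrite hj find_take_lt.
Qed.

Lemma has_expL L k : find shal L < k -> k < size L -> has shal (expL L k).
Proof.
move=> hj hk; rewrite /expL has_cat has_take_leq ?(ltnW hk) //.
by rewrite hj.
Qed.

Lemma nth_expL L j k : j < k -> k < size L -> nth 0 (expL L j) (k + d.-1) = nth 0 L k.
Proof.
move=> hjk hk; rewrite /expL nth_cat size_take (ltn_trans hjk hk).
rewrite ifF; last by lia.
rewrite nth_cat size_nseq ifF; last by lia.
rewrite nth_drop; congr nth; lia.
Qed.

Lemma mu_expL L k : k < size L -> nth 0 L k < m -> mu (expL L k) < mu L.
Proof.
move=> hk hm; rewrite {2}(expL_split hk) /mu /expL !map_cat !sumn_cat /=.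
rewrite map_nseq.
have -> : sumn (nseq d (d ^ (m - (nth 0 L k).+1)).-1) = d * (d ^ (m - (nth 0 L k).+1)).-1.
  by move: (d) (_.-1) => n x; elim: n => //= n ->; rewrite mulSn.
have -> : m - nth 0 L k = (m - (nth 0 L k).+1).+1 by lia.
rewrite expnS.
have : 0 < d ^ (m - (nth 0 L k).+1) by rewrite expn_gt0; lia.
move: (d ^ _) => X hX.
rewrite -subn1 mulnBr muln1.
have : d <= d * X by rewrite leq_pmulr.
nia.
Qed.

Lemma mu_pos L : has shal L -> 0 < mu L.
Proof.
elim: L => //= e L IH /orP [he|hL].
- rewrite /shal in he; have : 1 < d ^ (m - e).
    by rewrite -{1}(expn0 d) ltn_exp2l //; lia.
  by rewrite /mu /=; lia.
- by move: (IH hL); rewrite /mu /=; lia.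
Qed.

Lemma all_le_sumn L : all (fun e => e <= sumn L) L.
Proof.
elim: L => //= e L IH; rewrite leq_addr /=.
by apply: sub_all IH => x /= h; apply: leq_trans h (leq_addl _ _).
Qed.

End Lists.

Section Trips.
Variable d : nat.
Hypothesis hd : 1 < d.
Variable C : CloningSystem d.

Local Notation trip := (trip C).
Implicit Types t y f z : trip.
Let d0 : 0 < d. Proof. by apply: ltnW. Qed.
Local Notation one n := (gone C n).

Lemma mulKg n (x y : G C n) : gmul (ginv x) (gmul x y) = y.
Proof. by rewrite gmulA gmulVg gmul1g. Qed.

Lemma g_idem n (x : G C n) : gmul x x = x -> x = one n.
Proof. by move=> h; rewrite -(gmulVg x) -{3}h mulKg. Qed.

Lemma inv_uniq n (a b : G C n) : gmul a b = one n -> a = ginv b.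
Proof. by move=> h; rewrite -(gmulg1 a) -(gmulgV b) gmulA h gmul1g. Qed.

Lemma ginvK n (x : G C n) : ginv (ginv x) = x.
Proof. by apply/esym/inv_uniq; rewrite gmulgV. Qed.

Lemma rho1 n (i : 'I_n) : rho (one n) i = i.
Proof.
have h := rho_hom (one n) (one n) i; rewrite gmul1g in h.
by apply: (@perm_inj _ (rho (one n))); rewrite -h.
Qed.

Lemma kappa1 n (k : 'I_n) : kappa k (one n) = one (n + d.-1).
Proof.
apply: g_idem; have h := clone_C1 k (one n) (one n).
by rewrite gmul1g rho1 in h; rewrite -h.
Qed.

Lemma kappaV n (k : 'I_n) (g : G C n) : kappa (rho g k) (ginv g) = ginv (kappa k g).
Proof. by apply: inv_uniq; rewrite -clone_C1 gmulVg kappa1. Qed.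

Lemma rhoV n (g : G C n) k : rho (ginv g) (rho g k) = k.
Proof. by rewrite -rho_hom gmulVg rho1. Qed.

Lemma rhoVr n (g : G C n) k : rho g (rho (ginv g) k) = k.
Proof. by rewrite -rho_hom gmulgV rho1. Qed.

Definition app (t : trip) (k : nat) : trip :=
  match t with
  | Trip n T g U =>
    match (insub k : option 'I_n) with
    | Some k' => @Trip _ C (n + d.-1) (expand T (rho g k')) (kappa k' g) (expand U k)
    | None => t
    end
  end.

Arguments app : simpl never.

Lemma app_ord n T (g : G C n) U (k : 'I_n) :
  app (Trip T g U) k = @Trip _ C (n + d.-1) (expand T (rho g k)) (kappa k g) (expand U k).
Proof. by rewrite /app valK. Qed.

Lemma app_out n T (g : G C n) U k : n <= k -> app (Trip T g U) k = Trip T g U.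
Proof. by move=> h; rewrite /app insubF // ltnNge h. Qed.

Lemma valid_app t k : valid t -> k < tn t -> valid (app t k).
Proof.
case: t => n T g U [hT hU] hk; rewrite /= in hT hU hk.
rewrite -[k]/(nat_of_ord (Ordinal hk)) app_ord; split => /=.
- by rewrite (nleaves_expand d0) ?hT.
- by rewrite (nleaves_expand d0) ?hU.
Qed.

Lemma step_app t t' : expand_step t t' <-> valid t /\ exists k, k < tn t /\ t' = app t k.
Proof.
split.
- case=> hv [k ->]; split => //; exists k; split => //.
  by case: t hv k => n T g U hv k /=; rewrite app_ord.
- case=> hv [k [hk ->]]; split => //; exists (Ordinal hk).
  by case: t hv hk => n T g U hv hk /=; rewrite -[k]/(nat_of_ord (Ordinal hk)) app_ord.
Qed.


Lemma C3_shift n (j k : 'I_n) (g : G C n) : j < k ->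
  nat_of_ord (rho (kappa j g) (shift_by d.-1 k)) =
  if rho g k < rho g j then nat_of_ord (rho g k) else rho g k + d.-1.
Proof.
move=> hjk; rewrite clone_C3 /=; last by apply/negP => /andP [h1 h2]; lia.
rewrite /clone_perm /clone_blk.
have -> : (k + d.-1 < j) = false by lia.
have -> : (k + d.-1 < j + d) = false by lia.
rewrite addnK.
have -> : insubd j k = k by apply: val_inj; rewrite /= val_insubd ltn_ord.
have -> : (k == j) = false by apply/eqP => /(congr1 val) /=; lia.
by [].
Qed.

Lemma C3_widen n (j k : 'I_n) (g : G C n) : j < k ->
  nat_of_ord (rho (kappa k g) (widen_by d.-1 j)) =
  if rho g j < rho g k then nat_of_ord (rho g j) else rho g j + d.-1.
Proof.
move=> hjk; rewrite clone_C3 /=; last by apply/negP => /andP [h1 h2]; lia.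
rewrite /clone_perm /clone_blk /= hjk.
have -> : insubd k j = j by apply: val_inj; rewrite /= val_insubd ltn_ord.
have -> : (j == k) = false by apply/eqP => /(congr1 val) /=; lia.
by [].
Qed.

Lemma diamond t j k : valid t -> j < k -> k < tn t ->
  app (app t j) (k + d.-1) = app (app t k) j.
Proof.
case: t => n T g U [hT hU] /= hjk hk; rewrite /= in hT hU.
have hj : j < n by apply: ltn_trans hk.
pose j' := Ordinal hj; pose k' := Ordinal hk.
have -> : app (app (Trip T g U) j) (k + d.-1) =
          app (app (Trip T g U) j') (shift_by d.-1 k') by [].
have -> : app (app (Trip T g U) k) j =
          app (app (Trip T g U) k') (widen_by d.-1 j') by [].
rewrite !app_ord (clone_C2 g (k := j') (l := k') hjk).
congr Trip; last first.
  by rewrite /= (expand_comm d0) // hU.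
rewrite (C3_shift (j:=j') (k:=k') g hjk) (C3_widen (j:=j') (k:=k') g hjk).
have hne : rho g j' != rho g k' by rewrite (inj_eq perm_inj); apply/eqP => /(congr1 val) /=; lia.
have ha : (rho g j' : nat) < nleaves T by rewrite hT.
have hb : (rho g k' : nat) < nleaves T by rewrite hT.
case: (ltngtP (rho g j') (rho g k')) => h.
- by rewrite (expand_comm d0).
- by rewrite (expand_comm d0).
- by rewrite h.
Qed.


Definition inv (t : trip) : trip :=
  match t with Trip n T g U => @Trip _ C n U (ginv g) T end.

Lemma invK t : inv (inv t) = t.
Proof. by case: t => n T g U /=; rewrite ginvK. Qed.

Lemma inv_app n T (g : G C n) U (k : 'I_n) :
  inv (app (Trip T g U) k) = app (inv (Trip T g U)) (rho g k).
Proof. by rewrite /= !app_ord /= rhoV kappaV. Qed.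

Lemma valid_inv t : valid (inv t) <-> valid t.
Proof. by case: t => n T g U; rewrite /valid /=; split => -[]. Qed.

Lemma inv_step t t' : expand_step t t' -> expand_step (inv t) (inv t').
Proof.
case/step_app => hv [k [hk ->]]; apply/step_app; split; first exact/valid_inv.
case: t hv hk => n T g U hv /= hk.
exists (rho g (Ordinal hk)); split => //.
by rewrite -[k]/(nat_of_ord (Ordinal hk)) inv_app.
Qed.

Lemma inv_equiv t t' : trip_equiv t t' -> trip_equiv (inv t) (inv t').
Proof.
elim=> {t t'} [t t' h|t|t t' _ IH|t t' t'' _ IH1 _ IH2].
- by apply: rst_step; apply: inv_step.
- exact: rst_refl.
- exact: rst_sym.
- exact: rst_trans IH2.
Qed.

Definition star := clos_refl_trans_1n trip (@expand_step d C).

Lemma star_equiv t t' : star t t' -> trip_equiv t t'.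
Proof.
elim=> {t t'} [t|t t1 t' h _ IH]; first exact: rst_refl.
by apply: rst_trans IH; apply: rst_step.
Qed.

Lemma star_trans t1 t2 t3 : star t1 t2 -> star t2 t3 -> star t1 t3.
Proof.
elim=> {t1 t2} // t t1 t2 h _ IH h23.
by apply: Relation_Operators.rt1n_trans h (IH h23).
Qed.

Lemma Trip_inj n T T' (g g' : G C n) U U' :
  @Trip _ C n T g U = Trip T' g' U' -> [/\ T = T', g = g' & U = U'].
Proof.
case=> -> h ->; split => //.
exact: (Eqdep_dec.inj_pair2_eq_dec _ PeanoNat.Nat.eq_dec _ _ _ _ h).
Qed.

Definition Prod (y f z : trip) : Prop :=
  exists n P Q R (h1 h2 : G C n),
    [/\ y = Trip P h1 Q, f = Trip Q h2 R, z = Trip P (gmul h1 h2) R, valid y & valid f].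

Lemma Prod_func y f z z' : Prod y f z -> Prod y f z' -> z = z'.
Proof.
case=> n [P [Q [R [h1 [h2 [-> -> -> _ _]]]]]].
case=> n' [P' [Q' [R' [h1' [h2' [ey ef -> _ _]]]]]].
have en := congr1 (@tn d C) ey; rewrite /= in en.
subst n'.
case/Trip_inj: ey => eP eh _; case/Trip_inj: ef => _ eh2 eR.
by rewrite eP eh eh2 eR.
Qed.

Lemma Prod_valid y f z : Prod y f z -> valid z.
Proof.
by case=> n [P [Q [R [h1 [h2 [-> -> -> [hP _] [_ hR]]]]]]]; split.
Qed.

Definition appL (t : trip) (j : nat) : trip :=
  match t with
  | Trip n T g U =>
    match (insub j : option 'I_n) with
    | Some j' => app t (rho (ginv g) j')
    | None => t
    end
  end.

Arguments appL : simpl never.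
Arguments inv : simpl never.

Lemma appL_ord n T (g : G C n) U (j : 'I_n) :
  appL (Trip T g U) j = app (Trip T g U) (rho (ginv g) j).
Proof. by rewrite /appL valK. Qed.

Lemma inv_appL n T (g : G C n) U (j : 'I_n) :
  inv (appL (Trip T g U) j) = app (inv (Trip T g U)) j.
Proof. by rewrite appL_ord inv_app rhoVr. Qed.

Lemma sync_L y f z j : Prod y f z -> j < tn f ->
  exists y' z', [/\ Prod y' (appL f j) z', expand_step y y' & expand_step z z'].
Proof.
move=> hP; have hz := Prod_valid hP.
case: hP hz => n [P [Q [R [h1 [h2 [-> -> -> hy hf]]]]]] hz /= hj.
pose j' := Ordinal hj; pose k := rho (ginv h2) j'.
exists (app (Trip P h1 Q) (rho h2 k)), (app (Trip P (gmul h1 h2) R) k).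
split.
- rewrite -[j]/(nat_of_ord j') appL_ord -/k !app_ord.
  exists (n + d.-1), (expand P (rho h1 (rho h2 k))), (expand Q (rho h2 k)), (expand R k),
    (kappa (rho h2 k) h1), (kappa k h2).
  have v1 := valid_app (t := Trip P h1 Q) (k := rho h2 k) hy (ltn_ord _).
  have v2 := valid_app (t := Trip Q h2 R) (k := k) hf (ltn_ord _).
  rewrite app_ord in v1; rewrite app_ord in v2.
  split => //.
  by rewrite rho_hom clone_C1.
- by apply/step_app; split => //; exists (rho h2 k); split => //=.
- by apply/step_app; split => //; exists k; split => //=.
Qed.


Lemma tU_app t k : k < tn t -> tU (app t k) = expand (tU t) k.
Proof. by case: t => n T g U /= hk; rewrite -[k]/(nat_of_ord (Ordinal hk)) app_ord. Qed.

Lemma tn_app t k : k < tn t -> tn (app t k) = tn t + d.-1.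
Proof. by case: t => n T g U /= hk; rewrite -[k]/(nat_of_ord (Ordinal hk)) app_ord. Qed.

Lemma ld_app t k : valid t -> k < tn t -> ld (tU (app t k)) = expL d (ld (tU t)) k.
Proof. by case=> _ hU hk; rewrite tU_app // (LD d0) // hU. Qed.

Lemma size_ldU t : valid t -> size (ld (tU t)) = tn t.
Proof. by case=> _ hU; rewrite size_ld. Qed.

Section Canon.
Variable m : nat.

Fixpoint Phi (N : nat) (t : trip) : trip :=
  match N with
  | 0 => t
  | N'.+1 => if has (shal m) (ld (tU t)) then Phi N' (app t (find (shal m) (ld (tU t)))) else t
  end.

Fixpoint Psi (N : nat) (t : trip) : trip :=
  match N with
  | 0 => t
  | N'.+1 => if has (shal m) (ld (tT t)) then Psi N' (appL t (find (shal m) (ld (tT t)))) else t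
  end.

Definition allm (t : trip) := all (fun e => e <= m) (ld (tU t)).
Definition muU (t : trip) := mu d m (ld (tU t)).

Lemma find_lt t : valid t -> has (shal m) (ld (tU t)) -> find (shal m) (ld (tU t)) < tn t.
Proof. by move=> hv; rewrite has_find size_ldU. Qed.

Lemma step_props t k : valid t -> k < tn t -> nth 0 (ld (tU t)) k < m -> allm t ->
  [/\ valid (app t k), allm (app t k) & muU (app t k) < muU t].
Proof.
move=> hv hk hm ha; split; first exact: valid_app.
- by move: ha; rewrite /allm ld_app // all_expL // ?size_ldU // => -> .
- by rewrite /muU ld_app // mu_expL // size_ldU.
Qed.

Lemma Phi_stable N t : valid t -> allm t -> muU t <= N -> Phi N.+1 t = Phi N t.
Proof.
elim: N t => [|N IH] t hv ha hmu.
- rewrite /=; case: ifP => // hh.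
  by move: (mu_pos hd hh); rewrite -/(muU t); lia.
- rewrite [Phi N.+2 t]/= [Phi N.+1 t]/=; case: ifP => // hh.
  have hj := find_lt hv hh.
  have [v1 a1 m1] := step_props hv hj (nth_find 0 hh) ha.
  by apply: IH => //; lia.
Qed.

Lemma Phi_stable_le N N' t : valid t -> allm t -> muU t <= N -> N <= N' -> Phi N' t = Phi N t.
Proof.
move=> hv ha hmu; elim: N' => [|N' IH]; first by rewrite leqn0 => /eqP ->.
rewrite leq_eqVlt => /orP [/eqP -> //|h].
by rewrite Phi_stable ?IH //; lia.
Qed.

Lemma Phi_K N t k : valid t -> allm t -> k < tn t -> nth 0 (ld (tU t)) k < m ->
  muU t <= N -> Phi N (app t k) = Phi N t.
Proof.
elim: N t k => [|N IH] t k hv ha hk hm hmu.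
- have hh : has (shal m) (ld (tU t)) by apply/hasP; exists (nth 0 (ld (tU t)) k) => //; apply: mem_nth; rewrite size_ldU.
  by move: (mu_pos hd hh); rewrite -/(muU t); lia.
- have hks : k < size (ld (tU t)) by rewrite size_ldU.
  have hh : has (shal m) (ld (tU t)) by rewrite has_find; apply: leq_ltn_trans (find_le hks hm) hks.
  have hjk := find_le hks hm.
  have [v1 a1 m1] := step_props hv hk hm ha.
  rewrite [Phi N.+1 t]/= hh.
  set j := find (shal m) (ld (tU t)) in hjk *.
  case: (ltnP j k) => hjk'; last first.
    have -> : j = k by apply/eqP; rewrite eqn_leq hjk hjk'.
    by rewrite Phi_stable //; lia.
  have hj := find_lt hv hh.
  have [v2 a2 m2] := step_props hv hj (nth_find 0 hh) ha.
  rewrite /= ld_app // has_expL // find_expL // -/j.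
  rewrite -diamond //.
  apply: IH => //.
  + by rewrite tn_app // ltn_add2r.
  + by rewrite ld_app // -/j nth_expL.
  + by move: m2 hmu; rewrite -/j; lia.
Qed.

Definition PhiM t := Phi (muU t) t.

Lemma PhiM_step t k : valid t -> k < tn t -> allm (app t k) -> PhiM (app t k) = PhiM t.
Proof.
move=> hv hk; rewrite /allm ld_app // all_expL // ?size_ldU // => /andP [ha hm].
have [v1 a1 m1] := step_props hv hk hm ha.
rewrite /PhiM -(@Phi_stable_le (muU (app t k)) (muU t) (app t k)) //; last by lia.
by rewrite Phi_K.
Qed.

Lemma PhiM_star t t' : star t t' -> valid t -> allm t' -> allm t /\ PhiM t = PhiM t'.
Proof.
elim=> {t t'} [t|t t1 t' hs _ IH] hv ha //.
case/step_app: hs => _ [k [hk e]]; subst t1.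
have [ha1 e1] := IH (valid_app hv hk) ha.
split; last by rewrite -e1 PhiM_step.
by move: ha1; rewrite /allm ld_app // all_expL // ?size_ldU // => /andP [].
Qed.

Lemma Phi_out N t : valid t -> allm t -> muU t <= N ->
  [/\ ~~ has (shal m) (ld (tU (Phi N t))), allm (Phi N t), valid (Phi N t) & star t (Phi N t)].
Proof.
elim: N t => [|N IH] t hv ha hmu.
- split => //; last by rewrite /star; constructor.
  by apply/negP => hh; move: (mu_pos hd hh); rewrite -/(muU t); lia.
- rewrite /=; case: ifP => hh; last by split => //; rewrite ?hh // /star; constructor.
  have hj := find_lt hv hh.
  have [v1 a1 m1] := step_props hv hj (nth_find 0 hh) ha.
  have [h1 h2 h3 h4] := IH _ v1 a1 (ltnSE (leq_trans m1 hmu)).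
  split => //; apply: Relation_Operators.rt1n_trans h4.
  by apply/step_app; split => //; exists (find (shal m) (ld (tU t))).
Qed.

Lemma Phi_fix N t : ~~ has (shal m) (ld (tU t)) -> Phi N t = t.
Proof. by case: N => [|N] //= h; rewrite (negbTE h). Qed.

Lemma Psi_inv N t : valid t -> Psi N t = inv (Phi N (inv t)).
Proof.
elim: N t => [|N IH] t hv; first by rewrite /= invK.
rewrite /=.
have -> : tU (inv t) = tT t by case: t {hv}.
case: ifP => hh; last by rewrite invK.
case: t hv hh => n T g U hv hh /=.
have hj : find (shal m) (ld T) < n by move: hh; rewrite has_find size_ld; case: hv => -> _.
have -> : find (shal m) (ld T) = nat_of_ord (Ordinal hj) by [].
rewrite IH; last first.
  by rewrite appL_ord; apply: valid_app => //=.
by rewrite inv_appL.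
Qed.

Lemma sync N y f z : Prod y f z ->
  exists y1 z1, [/\ Prod y1 (Psi N f) z1, star y y1 & star z z1].
Proof.
elim: N y f z => [|N IH] y f z hP.
- by exists y, z; split => //; rewrite /star; constructor.
- rewrite /=; case: ifP => hh; last by exists y, z; split => //; rewrite /star; constructor.
  have hf : valid f by case: hP => n [P [Q [R [h1 [h2 [_ _ _ _ ?]]]]]].
  have hj : find (shal m) (ld (tT f)) < tn f.
    by move: hh; rewrite has_find size_ld; case: hf => ->.
  have [y' [z' [hP' sy sz]]] := sync_L hP hj.
  have [y1 [z1 [hP1 sy1 sz1]]] := IH _ _ _ hP'.
  exists y1, z1; split => //.
  + exact: Relation_Operators.rt1n_trans sy sy1.
  + exact: Relation_Operators.rt1n_trans sz sz1.
Qed.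

End Canon.

Lemma Prod_mid y f z : Prod y f z -> [/\ tU y = tT f, valid y & valid f].
Proof. by case=> n [P [Q [R [h1 [h2 [-> -> _ hy hf]]]]]]. Qed.

Lemma tU_inv t : tU (inv t) = tT t.
Proof. by case: t. Qed.

Lemma tT_inv t : tT (inv t) = tU t.
Proof. by case: t. Qed.

Lemma allm_mono m m' t : m <= m' -> allm m t -> allm m' t.
Proof. by move=> h; apply: sub_all => x /= hx; apply: leq_trans hx h. Qed.

Lemma allm_sumn t : allm (sumn (ld (tU t))) t.
Proof. exact: all_le_sumn. Qed.

Lemma canon m y f z : Prod y f z -> sumn (ld (tU y)) <= m ->
  exists z1, Prod (PhiM m y) (inv (PhiM m (inv f))) z1 /\ star z z1.
Proof.
move=> hP hm; have [eQ hy hf] := Prod_mid hP.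
have hfi : valid (inv f) by apply/valid_inv.
have ha : allm m (inv f) by rewrite /allm tU_inv -eQ; apply: allm_mono hm (allm_sumn _).
have [y1 [z1 [hP1 sy sz]]] := @sync m (muU m (inv f)) _ _ _ hP.
have [h1 h2 _ _] := Phi_out hfi ha (leqnn _).
rewrite Psi_inv // in hP1.
have [eQ1 hy1 _] := Prod_mid hP1.
have hay1 : allm m y1 by rewrite /allm eQ1 tT_inv.
have [_ e] := PhiM_star sy hy hay1.
exists z1; split => //.
rewrite e /PhiM Phi_fix // eQ1 tT_inv //.
Qed.

Lemma PhiM_equiv t t' : trip_equiv t t' -> exists M, forall m, M <= m -> PhiM m t = PhiM m t'.
Proof.
elim=> {t t'} [t t' h|t|t t' _ [M IH]|t t' t'' _ [M1 IH1] _ [M2 IH2]].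
- exists (sumn (ld (tU t'))) => m hm.
  case/step_app: h => hv [k [hk e]]; subst t'.
  by rewrite PhiM_step //; apply: allm_mono hm (allm_sumn _).
- by exists 0.
- by exists M => m hm; rewrite IH.
- exists (M1 + M2) => m hm; rewrite IH1 ?IH2 //; lia.
Qed.

Lemma W2 y f z y' f' z' : Prod y f z -> Prod y' f' z' ->
  trip_equiv y y' -> trip_equiv f f' -> trip_equiv z z'.
Proof.
move=> hP hP' ey ef.
have [M1 h1] := PhiM_equiv ey.
have [M2 h2] := PhiM_equiv (inv_equiv ef).
pose m := M1 + M2 + sumn (ld (tU y)) + sumn (ld (tU y')).
have [z1 [hz1 sz1]] := canon (m := m) hP (ltac:(rewrite /m; lia)).
have [z2 [hz2 sz2]] := canon (m := m) hP' (ltac:(rewrite /m; lia)).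
rewrite -h1 ?h2 -1?h2 in hz2; try (rewrite /m; lia).
have e := Prod_func hz1 hz2; subst z2.
apply: rst_trans (star_equiv sz1) _.
exact: rst_sym (star_equiv sz2).
Qed.

Definition isone t := tg t = gone C (tn t).

Lemma isone_step t t' : expand_step t t' -> (isone t <-> isone t').
Proof.
case/step_app => hv [k [hk ->]].
case: t hv hk => n T g U hv /= hk.
rewrite -[k]/(nat_of_ord (Ordinal hk)) app_ord /isone /=.
split => [->|h]; first exact: kappa1.
by apply: (@kappa_inj _ C _ (Ordinal hk)); rewrite h kappa1.
Qed.

Lemma isone_equiv t t' : trip_equiv t t' -> (isone t <-> isone t').
Proof.
elim=> {t t'} [t t' h|t|t t' _ IH|t t' t'' _ IH1 _ IH2].
- exact: isone_step.
- by [].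
- by rewrite IH.
- by rewrite IH1 IH2.
Qed.

End Trips.

Section MainSec.
Variable d : nat.
Hypothesis hd : 1 < d.
Variable C : CloningSystem d.
Implicit Types t x : trip C.

Lemma TU_eq (A B : dtree d) m : nleaves A = m -> TU C A B = @Trip d C m A (gone C m) B.
Proof. by move=> h; rewrite /TU h. Qed.

Lemma grow N t : valid t -> exists t', [/\ star t t', valid t' & N <= tn t'].
Proof.
elim: N => [|N IH] hv; first by exists t; split => //; rewrite /star; constructor.
have [t' [st vt hn]] := IH hv.
have h0 : 0 < tn t' by case: vt => <- _; apply: nleaves_gt0; lia.
exists (app t' 0); split.
- apply: star_trans st _; apply: Relation_Operators.rt1n_trans (Relation_Operators.rt1n_refl _ _ _).
  by apply/step_app; split => //; exists 0.
- exact: valid_app.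
- by rewrite tn_app //; lia.
Qed.

Lemma teq_sym t t' : trip_equiv t t' -> trip_equiv t' t.
Proof. exact: rst_sym. Qed.
Lemma teq_trans t1 t2 t3 : trip_equiv t1 t2 -> trip_equiv t2 t3 -> trip_equiv t1 t3.
Proof. exact: rst_trans. Qed.
Lemma teq_step t t' : expand_step t t' -> trip_equiv t t'.
Proof. exact: rst_step. Qed.

Lemma key x x' (n : nat) T (g : G C n) U :
  trip_equiv x x' -> x' = Trip T g U -> valid x' ->
  (forall A B : dtree d, nleaves A = nleaves B -> n <= nleaves A -> conj_in_F x A B) ->
  forall k k' : 'I_n, kappa k g = kappa k' g.
Proof.
move=> ex ex' hv H k k'.
have [hT hU] := hv; rewrite ex' /= in hT hU.
pose A := expand T (rho g k); pose B := expand T (rho g k').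
have d0 : 0 < d by lia.
have nA : nleaves A = n + d.-1 by rewrite /A nleaves_expand // hT.
have nB : nleaves B = n + d.-1 by rewrite /B nleaves_expand // hT.
have [a' [b' [c [hinv [hm1 [hm2 hF]]]]]] := H A B (etrans nA (esym nB)) (ltac:(rewrite nA; lia)).
case: hinv => n1 [T1 [U1 [g1 [hv1 [ex1 ea1]]]]].
have e1 : trip_equiv (inv x') a'.
  apply: teq_trans (inv_equiv (teq_trans (teq_sym ex) ex1)) _.
  by apply: teq_sym.
pose y0 := inv (app x' k).
have ey0 : trip_equiv y0 a'.
  apply: teq_trans e1; apply: teq_sym; apply: teq_step.
  rewrite /y0 ex' inv_app; apply/step_app; split; first by apply/valid_inv; rewrite -ex'.
  by exists (rho g k); split.
have y0E : y0 = Trip (expand U k) (ginv (kappa k g)) A.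
  by rewrite /y0 ex' app_ord.
case: hm1 => n2 [P [Q [R [h1 [h2 [vy [vf [ey [ef ez]]]]]]]]].
have P1 : Prod y0 (TU C A B) (Trip (expand U k) (gmul (ginv (kappa k g)) (gone C _)) B).
  rewrite y0E (TU_eq B nA).
  do 6 eexists; split; try reflexivity.
  - by split => //=; rewrite (nleaves_expand d0) hU.
  - by split.
have P2 : Prod (Trip P h1 Q) (Trip Q h2 R) (Trip P (gmul h1 h2) R).
  by do 6 eexists; split; try reflexivity.
have ez0 := W2 hd P1 P2 (teq_trans ey0 ey) ef.
rewrite gmulg1 in ez0.
case: hm2 => n3 [P' [Q' [R' [k1 [k2 [vy' [vf' [ey' [ef' ez']]]]]]]]].
have P3 : Prod (Trip (expand U k) (ginv (kappa k g)) B) (app x' k')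
               (Trip (expand U k) (gmul (ginv (kappa k g)) (kappa k' g)) (expand U k')).
  rewrite ex' app_ord.
  do 6 eexists; split; try reflexivity.
  - by split => //=; rewrite (nleaves_expand d0) hU.
  - by split => //=; rewrite (nleaves_expand d0) ?hU ?hT.
have P4 : Prod (Trip P' k1 Q') (Trip Q' k2 R') (Trip P' (gmul k1 k2) R').
  by do 6 eexists; split; try reflexivity.
have ex'k : trip_equiv (app x' k') x.
  apply: teq_trans (teq_sym ex); apply: teq_sym; apply: teq_step.
  by apply/step_app; split => //; exists k'; split => //; rewrite ex'.
have ec0 := W2 hd P3 P4 (teq_trans (teq_trans ez0 (teq_sym ez)) ey') (teq_trans ex'k ef').
case: hF => S [V [hSV eF]].
have ec : trip_equiv (Trip (expand U k) (gmul (ginv (kappa k g)) (kappa k' g)) (expand U k')) (TU C S V).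
  by apply: teq_trans ec0 _; apply: teq_trans (teq_sym ez') eF.
have := proj2 (isone_equiv ec) erefl.
rewrite /isone /= => h.
by rewrite -(gmulg1 (kappa k g)) -h gmulA gmulgV gmul1g.
Qed.

End MainSec.

Unset Implicit Arguments.

Theorem mainTheorem2 (d : nat) (hd : 2 <= d) (C : CloningSystem d) (n0 : nat)
  (hn0 : forall n : nat, n0 <= n -> 0 < n ->
         forall g : G C (n + d.-1), (forall k : 'I_n, exists h : G C n, kappa k h = g) ->
         g = gone C (n + d.-1))
  (x : trip C) (hx : valid x)
  (H : forall T U : dtree d, nleaves T = nleaves U -> n0 <= nleaves T ->
       conj_in_F x T U) :
  inF x.
Proof.
have [x' [sx vx hn]] := grow hd n0 hx.
have ex := star_equiv sx.
have iso : isone x'.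
  case: x' ex vx hn sx => n T g U ex vx hn _ /=.
  have hk := key hd ex erefl vx (fun A B e h => H A B e (leq_trans hn h)).
  have n_pos : 0 < n.
    case: vx => /= hT _; rewrite -hT; exact: (nleaves_gt0 (ltnW hd)).
  pose k0 := Ordinal n_pos.
  have h1 := hn0 n hn n_pos (kappa k0 g) (fun k => ex_intro _ g (hk k k0)).
  by apply: (@kappa_inj _ C _ k0); rewrite h1 kappa1.
have := proj2 (isone_equiv ex) iso.
case: x hx {H ex sx} => n T g U [hT hU] /=; rewrite /= in hT hU; subst n.
rewrite /isone /= => ->.
exists T, U; split; first by rewrite hU.
exact: rst_refl.
Qed.
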